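(* Every finite edge-transitive connected graph $K$ is edge-costly in the class of connected graphs.
   Context: ''Graph'' may be understood in any of the usual senses (directed, undirected, or mixed; multiple edges and/or loops allowed or not), fixed throughout; isomorphisms and automorphisms preserve the corresponding structure. ''Subgraph'' means an arbitrary (not necessarily induced) subgraph. A graph is edge-transitive if its automorphism group acts transitively on its edges. For a finite graph $K$ and a graph $\Gamma$, the edge representativeness $\Upsilon_e(K,\Gamma)$ is the minimal integer $n$ such that $\Gamma$ has a set $X$ of $n$ edges with the property that every subgraph of $\Gamma$ isomorphic to $K$ contains an edge of $X$; the symmetric edge representativeness $\Upsilon_e^{\mathrm{sym}}(K,\Gamma)$ is the minimal $n$ such that such a set $X$ of $n$ edges exists which is moreover invariant under $\mathrm{Aut}\,\Gamma$. A finite graph $K$ with $k$ edges is edge-costly in a class of graphs $\mathcal{K}$ if for every integer $m$ there exists a graph $\Gamma_m\in\mathcal{K}$ with $\Upsilon_e^{\mathrm{sym}}(K,\Gamma_m)=k\cdot\Upsilon_e(K,\Gamma_m)\ge m$. *)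

(* Defs.v *)
From Stdlib Require Import Relations.
From mathcomp Require Import all_boot all_fingroup.
Set Implicit Arguments. Unset Strict Implicit. Unset Printing Implicit Defensive.

(* Convention: graphs are SIMPLE UNDIRECTED graphs (no loops, no multiple edges). *)

Definition simple_graph (V : Type) (adj : V -> V -> Prop) : Prop :=
  (forall u v, adj u v -> adj v u) /\ (forall u, ~ adj u u).

Definition connected_graph (V : Type) (adj : V -> V -> Prop) : Prop :=
  inhabited V /\ forall u v, clos_refl_trans V adj u v.

Definition same_edge (V : Type) (p q : V * V) : Prop :=
  (p.1 = q.1 /\ p.2 = q.2) \/ (p.1 = q.2 /\ p.2 = q.1).

Definition edge_set_of_size (V : Type) (adj : V -> V -> Prop)
    (X : V -> V -> Prop) (n : nat) : Prop :=
  exists f : 'I_n -> V * V,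
    (forall i, adj (f i).1 (f i).2) /\
    (forall i j, same_edge (f i) (f j) -> i = j) /\
    (forall u v, X u v <-> exists i, same_edge (u, v) (f i)).

Definition graph_aut (V : Type) (adj : V -> V -> Prop) (s : V -> V) : Prop :=
  (exists t : V -> V, (forall v, t (s v) = v) /\ (forall v, s (t v) = v)) /\
  (forall u v, adj u v <-> adj (s u) (s v)).

Definition aut_invariant (V : Type) (adj : V -> V -> Prop) (X : V -> V -> Prop) : Prop :=
  forall s, graph_aut adj s -> forall u v, X u v -> X (s u) (s v).

(* every subgraph of Γ isomorphic to K (= image of an injective homomorphism
   K -> Γ) contains an edge of X *)
Definition represents (T : finType) (e : rel T) (V : Type) (adj : V -> V -> Prop)
    (X : V -> V -> Prop) : Prop :=
  forall phi : T -> V, injective phi -> (forall x y, e x y -> adj (phi x) (phi y)) ->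
    exists x y, e x y /\ X (phi x) (phi y).

Definition edge_repr_is (T : finType) (e : rel T) (V : Type) (adj : V -> V -> Prop)
    (n : nat) : Prop :=
  (exists X, edge_set_of_size adj X n /\ represents e adj X) /\
  (forall X m, edge_set_of_size adj X m -> represents e adj X -> n <= m).

Definition sym_edge_repr_is (T : finType) (e : rel T) (V : Type) (adj : V -> V -> Prop)
    (n : nat) : Prop :=
  (exists X, edge_set_of_size adj X n /\ aut_invariant adj X /\ represents e adj X) /\
  (forall X m, edge_set_of_size adj X m -> aut_invariant adj X ->
     represents e adj X -> n <= m).

Definition fsimple (T : finType) (e : rel T) : Prop := symmetric e /\ irreflexive e.

Definition fconnected (T : finType) (e : rel T) : Prop :=
  0 < #|T| /\ forall x y, connect e x y.

Definition faut (T : finType) (e : rel T) (s : {perm T}) : Prop :=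
  forall x y, e x y = e (s x) (s y).

Definition edge_transitive (T : finType) (e : rel T) : Prop :=
  forall x y x' y', e x y -> e x' y' ->
    exists s : {perm T}, faut e s /\ same_edge (s x, s y) (x', y').

Definition fedges (T : finType) (e : rel T) : {set {set T}} :=
  [set [set p.1; p.2] | p in [set p : (T * T)%type | e p.1 p.2]].

Definition num_edges (T : finType) (e : rel T) : nat := #|fedges e|.

Definition edge_costly_connected (T : finType) (e : rel T) : Prop :=
  forall m : nat, exists (V : Type) (adj : V -> V -> Prop),
    simple_graph adj /\ connected_graph adj /\
    exists n : nat, edge_repr_is e adj n /\
      sym_edge_repr_is e adj (num_edges e * n) /\ m <= num_edges e * n.

(* Main.v *)
Require Import Defs.
From mathcomp Require Import all_boot all_fingroup.
From Stdlib Require Import Relations ClassicalEpsilon.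
Set Implicit Arguments. Unset Strict Implicit. Unset Printing Implicit Defensive.

Section SameEdge.
Variable V : Type.
Lemma se_refl (p : V * V) : same_edge p p.
Proof. by left. Qed.
Lemma se_sym (p q : V * V) : same_edge p q -> same_edge q p.
Proof. case: p q => [a b] [c d]; rewrite /same_edge /=. by case=> [[-> ->]|[-> ->]]; auto. Qed.
Lemma se_trans (p q r : V * V) : same_edge p q -> same_edge q r -> same_edge p r.
Proof.
case: p q r => [a b] [c d] [f g]; rewrite /same_edge /=.
by case=> [[-> ->]|[-> ->]] [[-> ->]|[-> ->]]; auto.
Qed.
Lemma se_swap (u v : V) : same_edge (u, v) (v, u).
Proof. by right. Qed.
End SameEdge.

Lemma se_of_set (T : finType) V (f : T -> V) x z x' z' :
  [set x; z] = [set x'; z'] -> same_edge (f x, f z) (f x', f z').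
Proof.
move=> h.
have hx : x \in [set x'; z'] by rewrite -h !inE eqxx.
have hz : z \in [set x'; z'] by rewrite -h !inE eqxx orbT.
have hx' : x' \in [set x; z] by rewrite h !inE eqxx.
have hz' : z' \in [set x; z] by rewrite h !inE eqxx orbT.
move: hx hz hx' hz'; rewrite !inE.
move=> /orP[]/eqP hx /orP[]/eqP hz /orP[]/eqP hx' /orP[]/eqP hz'; subst;
  rewrite /same_edge /=; auto.
Qed.

Lemma se_inj (T : finType) V (f : T -> V) x z x' z' : injective f ->
  same_edge (f x, f z) (f x', f z') -> [set x; z] = [set x'; z'].
Proof.
move=> fi [[/= /fi -> /fi ->]|[/= /fi -> /fi ->]] //; exact: setUC.
Qed.

Lemma ex_choice (A : finType) (B : Type) (P : A -> B -> Prop) :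
  (forall a, exists b, P a b) -> exists g : A -> B, forall a, P a (g a).
Proof.
move=> H; exists (fun a => proj1_sig (constructive_indefinite_description _ (H a))).
move=> a; exact: proj2_sig (constructive_indefinite_description _ (H a)).
Qed.

Section Generic.
Variables (T : finType) (e : rel T) (V : Type) (adj : V -> V -> Prop).
Variables (I : finType) (psi : I -> T -> V).
Hypothesis he : fsimple e.
Hypothesis h_inj : forall i, injective (psi i).
Hypothesis h_hom : forall i x z, e x z -> adj (psi i x) (psi i z).
Hypothesis h_disj : forall i j x z x' z', e x z -> e x' z' ->
  same_edge (psi i x, psi i z) (psi j x', psi j z') -> i = j.
Hypothesis h_aut : forall i x z x' z', e x z -> e x' z' ->
  exists s, graph_aut adj s /\ same_edge (s (psi i x), s (psi i z)) (psi i x', psi i z').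
Variables a b : T.
Hypothesis hab : e a b.
Definition Xc (u v : V) := exists i, same_edge (u, v) (psi i a, psi i b).
Definition Xs (u v : V) := exists i x z, e x z /\ same_edge (u, v) (psi i x, psi i z).
Hypothesis h_cover : represents e adj Xc.
Hypothesis h_inv : aut_invariant adj Xs.
Hypothesis h_rep : represents e adj Xs.

Lemma X_sym X m : edge_set_of_size adj X m -> forall u v, X u v -> X v u.
Proof.
case=> f [_ [_ hX]] u v /hX [i hi]; apply/hX; exists i.
exact: se_trans (se_swap _ _) hi.
Qed.

Lemma copy_rep X i : represents e adj X -> exists x z, e x z /\ X (psi i x) (psi i z).
Proof. move=> hr; apply: hr; [exact: h_inj | exact: h_hom]. Qed.

Lemma Xc_size : edge_set_of_size adj Xc #|I|.
Proof.
exists (fun n => (psi (enum_val n) a, psi (enum_val n) b)); split; [|split].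
- by move=> n; apply: h_hom.
- by move=> n n' /(h_disj hab hab) /enum_val_inj.
- move=> u v; split.
  + by case=> i hi; exists (enum_rank i); rewrite enum_rankK.
  + by case=> n hn; exists (enum_val n).
Qed.

Lemma Xc_min X m : edge_set_of_size adj X m -> represents e adj X -> #|I| <= m.
Proof.
move=> hX hr; have [f [fadj [fd fX]]] := hX.
have: forall i, exists n : 'I_m, exists x z, e x z /\ same_edge (psi i x, psi i z) (f n).
  move=> i; have [x [z [exz /fX [n hn]]]] := copy_rep i hr.
  by exists n, x, z.
case/ex_choice => g hg.
have gi : injective g.
  move=> i j hij; have [x [z [exz h1]]] := hg i; have [x' [z' [exz' h2]]] := hg j.
  rewrite hij in h1; apply: (h_disj exz exz'); exact: se_trans h1 (se_sym h2).
by have := leq_card g gi; rewrite card_ord.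
Qed.

Definition Jset : {set {set T} * I} := setX (fedges e) [set: I].
Lemma card_J : #|Jset| = num_edges e * #|I|.
Proof. by rewrite /Jset cardsX cardsT. Qed.

Definition rep (E : {set T}) : T * T :=
  odflt (a, b) [pick p : T * T | e p.1 p.2 && (E == [set p.1; p.2])].

Lemma repP E : E \in fedges e -> e (rep E).1 (rep E).2 /\ E = [set (rep E).1; (rep E).2].
Proof.
move=> hE; rewrite /rep; case: pickP => [p /andP [h1 /eqP h2] //|h].
exfalso; move: hE => /imsetP [p]; rewrite inE => hp hE.
by have := h p; rewrite hp hE eqxx.
Qed.

Lemma edge_in x z : e x z -> [set x; z] \in fedges e.
Proof. by move=> exz; apply/imsetP; exists (x, z); rewrite ?inE. Qed.

Definition fs (n : 'I_#|Jset|) : V * V :=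
  let p := enum_val n in (psi p.2 (rep p.1).1, psi p.2 (rep p.1).2).

Lemma enum_J (n : 'I_#|Jset|) : (enum_val n).1 \in fedges e.
Proof. by have := enum_valP n; rewrite inE => /andP []. Qed.

Lemma fs_inj n n' : same_edge (fs n) (fs n') -> n = n'.
Proof.
  rewrite /fs => h.
  have [h1 h2] := repP (enum_J n); have [h1' h2'] := repP (enum_J n').
  have hi := h_disj h1 h1' h.
  move: h; rewrite hi => /(se_inj (@h_inj _)) hE.
  apply: enum_val_inj.
  have e1 : (enum_val n).1 = (enum_val n').1.
    by apply: (etrans h2); apply: (etrans _ (esym h2')).
  by move: e1 hi; case: (enum_val n) => [E i]; case: (enum_val n') => [E' i'] /= -> ->.
Qed.

Lemma Xs_size : edge_set_of_size adj Xs (num_edges e * #|I|).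
Proof.
rewrite -card_J.
exists fs; split; [|split].
- by move=> n; apply: h_hom; case: (repP (enum_J n)).
- exact: fs_inj.
- move=> u v; split.
  + case=> i [x [z [exz h]]].
    have hE : ([set x; z], i) \in Jset by rewrite inE edge_in ?inE.
    exists (enum_rank_in hE ([set x; z], i)); rewrite /fs enum_rankK_in //=.
    have [h1 h2] := repP (edge_in exz).
    apply: (se_trans h); exact: se_of_set.
  + case=> n hn; exists (enum_val n).2, (rep (enum_val n).1).1, (rep (enum_val n).1).2.
    by split => //; case: (repP (enum_J n)).
Qed.

Lemma Xs_min X m : edge_set_of_size adj X m -> aut_invariant adj X ->
  represents e adj X -> num_edges e * #|I| <= m.
Proof.
move=> hX hinv hr; have [f [fadj [fd fX]]] := hX.
have: forall n : 'I_#|Jset|, exists n' : 'I_m, same_edge (fs n) (f n').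
  move=> n; rewrite /fs.
  have [h1 _] := repP (enum_J n).
  have [x0 [z0 [e0 hX0]]] := copy_rep (enum_val n).2 hr.
  have [s [hs hse]] := h_aut (enum_val n).2 e0 h1.
  have /fX [n' hn'] := hinv s hs _ _ hX0.
  exists n'; exact: se_trans (se_sym hse) hn'.
case/ex_choice => g hg.
have gi : injective g.
  move=> n n' hnn; apply: fs_inj; apply: (se_trans (hg n)); rewrite hnn; exact: se_sym.
by have := leq_card g gi; rewrite !card_ord card_J.
Qed.

Lemma generic_main : edge_repr_is e adj #|I| /\ sym_edge_repr_is e adj (num_edges e * #|I|).
Proof.
split; split.
- exists Xc; split; [exact: Xc_size| exact: h_cover].
- move=> X m hX hr; exact: Xc_min hX hr.
- exists Xs; split; [exact: Xs_size| split; [exact: h_inv | exact: h_rep]].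
- move=> X m hX hi hr; exact: Xs_min hX hi hr.
Qed.
End Generic.

From Stdlib Require Import Relations ClassicalEpsilon Classical Lia.
From mathcomp Require Import zify.

Lemma crt_sym (V : Type) (R : V -> V -> Prop) : (forall u v, R u v -> R v u) ->
  forall u v, clos_refl_trans V R u v -> clos_refl_trans V R v u.
Proof.
move=> hs u v; elim=> [x y /hs h| x| x y z _ h1 _ h2]; first exact: rt_step.
- exact: rt_refl.
- exact: rt_trans h2 h1.
Qed.

Section ConsA.
Variables (T : finType) (e : rel T) (nu : nat).
Hypothesis he : fsimple e.
Hypothesis hdeg : forall x, exists z1 z2, z1 != z2 /\ e x z1 /\ e x z2.

Definition LA := #|T|.+1.

Inductive VA := Cv of 'I_nu & T | Pv of 'I_nu & T & 'I_LA | Hub.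

Definition adjA (u v : VA) : Prop :=
  match u, v with
  | Cv i x, Cv i' y => i = i' /\ e x y
  | Cv i x, Pv i' y j => i = i' /\ x = y /\ val j = 0
  | Pv i x j, Cv i' y => i = i' /\ x = y /\ val j = 0
  | Pv i x j, Pv i' y j' => i = i' /\ x = y /\ (val j' = (val j).+1 \/ val j = (val j').+1)
  | Pv _ _ j, Hub => val j = #|T|
  | Hub, Pv _ _ j => val j = #|T|
  | _, _ => False
  end.

Lemma adjA_sym u v : adjA u v -> adjA v u.
Proof.
have [hs _] := he.
case: u => [i x|i x j|]; case: v => [i' y|i' y j'|] //=.
- by case=> -> h; rewrite hs.
- by case=> -> [-> ->].
- by case=> -> [-> ->].
- by case=> -> [-> []]; auto.
Qed.

Lemma adjA_irr u : ~ adjA u u.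
Proof.
have [_ hi] := he.
case: u => [i x|i x j|] //=.
- by case=> _; rewrite hi.
- by case=> _ [_ [/eqP|/eqP]]; rewrite ?(gtn_eqF (ltnSn _)) ?(ltn_eqF (ltnSn _)) //; case: (val j) => //.
Qed.

Lemma simpleA : simple_graph adjA.
Proof. split; [exact: adjA_sym | exact: adjA_irr]. Qed.

Lemma reach_hubP i x : forall d (j : 'I_LA), val j + d = #|T| ->
  clos_refl_trans VA adjA (Pv i x j) Hub.
Proof.
elim=> [|d IH] j hj.
- by apply: rt_step; rewrite /= -hj addn0.
- have hj' : (val j).+1 < LA.
    by rewrite /LA; move: hj; move: (val j) => q; move: #|T| => c; lia.
  apply: rt_trans (IH (Ordinal hj') _); last by rewrite /= addSnnS.
  by apply: rt_step => /=; split=> //; split=> //; left.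
Qed.

Lemma reach_hub u : clos_refl_trans VA adjA u Hub.
Proof.
case: u => [i x|i x j|]; last exact: rt_refl.
- have h0 : 0 < LA by [].
  apply: rt_trans (reach_hubP i x (j := Ordinal h0) (d := #|T|) _) => //.
  exact: rt_step.
- have hj := ltn_ord j; rewrite /LA ltnS in hj.
  exact: reach_hubP (subnKC hj).
Qed.

Lemma connA : connected_graph adjA.
Proof.
split; first exact: (inhabits Hub).
move=> u v; apply: rt_trans (reach_hub u) _.
apply: crt_sym; [exact: adjA_sym | exact: reach_hub].
Qed.


Definition sA (g : T -> T) (i : 'I_nu) (v : VA) : VA :=
  match v with
  | Cv i' x => if i' == i then Cv i' (g x) else v
  | Pv i' x j => if i' == i then Pv i' (g x) j else v
  | Hub => Hub
  end.

Lemma sA_fwd (s : {perm T}) i : faut e s -> forall u v, adjA u v -> adjA (sA s i u) (sA s i v).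
Proof.
move=> hs u v.
case: u => [i1 x|i1 x j|]; case: v => [i2 y|i2 y j'|] //=.
- by case=> <- hxy; case: eqP => _ //=; rewrite -hs.
- by case=> <- [<- h]; case: eqP.
- by case=> <- [<- h]; case: eqP.
- by case=> <- [<- h]; case: eqP.
- by case: eqP.
- by case: eqP.
Qed.

Lemma faut_inv (s : {perm T}) : faut e s -> faut e (s^-1)%g.
Proof. by move=> hs x y; rewrite [in RHS]hs !permKV. Qed.

Lemma sAK (s : {perm T}) i v : sA (s^-1)%g i (sA s i v) = v.
Proof.
case: v => [i1 x|i1 x j|] //=; case: eqP => [->|h] /=; rewrite ?eqxx ?permK //;
  by case: eqP.
Qed.

Lemma sAKV (s : {perm T}) i v : sA s i (sA (s^-1)%g i v) = v.
Proof. by rewrite -{1}(invgK s) sAK. Qed.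

Lemma sA_aut (s : {perm T}) i : faut e s -> graph_aut adjA (sA s i).
Proof.
move=> hs; split.
- by exists (sA (s^-1)%g i); split=> v; [exact: sAK | exact: sAKV].
- move=> u v; split; first exact: sA_fwd.
  move/(sA_fwd i (faut_inv hs)); by rewrite !sAK.
Qed.


Lemma edge_surj (g : T -> T) : injective g -> (forall x y, e x y -> e (g x) (g y)) ->
  forall a b, e a b -> exists x y, e x y /\ g x = a /\ g y = b.
Proof.
move=> gi gh a b hab.
pose E := [set p : T * T | e p.1 p.2].
pose G := fun p : T * T => (g p.1, g p.2).
have Gi : injective G by move=> [p1 p2] [q1 q2] [/gi -> /gi ->].
have hsub : [set G p | p in E] \subset E.
  by apply/subsetP => q /imsetP [p]; rewrite !inE => hp ->; exact: gh.
have /subset_cardP h := card_imset E Gi.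
have := h hsub (a, b); rewrite !inE hab => /imsetP [[x y]]; rewrite inE => hxy [-> ->].
by exists x, y.
Qed.

Hypothesis hcon : forall x y, connect e x y.
Variable phi : T -> VA.
Hypothesis phi_inj : injective phi.
Hypothesis phi_hom : forall x y, e x y -> adjA (phi x) (phi y).

Definition belowA i x (j : 'I_LA) w :=
  (val j = 0 /\ w = Cv i x) \/ (exists j' : 'I_LA, w = Pv i x j' /\ val j = (val j').+1).
Definition aboveA i x (j : 'I_LA) w :=
  (exists j' : 'I_LA, w = Pv i x j' /\ val j' = (val j).+1) \/ (val j = #|T| /\ w = Hub).

Lemma Pv_nbrs i x j w : adjA (Pv i x j) w -> belowA i x j w \/ aboveA i x j w.
Proof.
case: w => [i' y|i' y j'|] /=.
- by case=> -> [-> h]; left; left.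
- case=> -> [-> [h|h]]; [right; left | left; right]; by exists j'.
- by move=> h; right; right.
Qed.

Lemma below_uniq i x j w1 w2 : belowA i x j w1 -> belowA i x j w2 -> w1 = w2.
Proof.
case=> [[h1 ->]|[j1 [-> h1]]] [[h2 ->]|[j2 [-> h2]]] //; try by rewrite h1 in h2.
by congr Pv; apply: val_inj; move: h1 h2 => -> [].
Qed.

Lemma above_uniq i x j w1 w2 : aboveA i x j w1 -> aboveA i x j w2 -> w1 = w2.
Proof.
case=> [[j1 [-> h1]]|[h1 ->]] [[j2 [-> h2]]|[h2 ->]] //.
- by congr Pv; apply: val_inj; rewrite h1 h2.
- by have := ltn_ord j1; rewrite /LA h1 -h2 ltnn.
- by have := ltn_ord j2; rewrite /LA h2 -h1 ltnn.
Qed.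

Definition inim v := exists t, phi t = v.

Lemma two_sides i x j : inim (Pv i x j) ->
  (exists w, belowA i x j w /\ inim w) /\ (exists w, aboveA i x j w /\ inim w).
Proof.
case=> t ht; have [z1 [z2 [hne [h1 h2]]]] := hdeg t.
have a1 := phi_hom h1; have a2 := phi_hom h2; rewrite ht in a1 a2.
have hw : phi z1 <> phi z2 by move/phi_inj => h; rewrite h eqxx in hne.
case: (Pv_nbrs a1) => b1; case: (Pv_nbrs a2) => b2.
- by case: hw; exact: below_uniq b1 b2.
- by split; [exists (phi z1) | exists (phi z2)]; split=> //; eexists.
- by split; [exists (phi z2) | exists (phi z1)]; split=> //; eexists.
- by case: hw; exact: above_uniq b1 b2.
Qed.

Lemma step_up i x j : inim (Pv i x j) -> val j < #|T| ->
  exists j' : 'I_LA, val j' = (val j).+1 /\ inim (Pv i x j').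
Proof.
move=> /two_sides [_ [w [[[j' [-> h]]|[h _]] hw]]] hlt.
- by exists j'.
- by rewrite h ltnn in hlt.
Qed.

Lemma step_down i x j : inim (Pv i x j) -> 0 < val j ->
  exists j' : 'I_LA, (val j').+1 = val j /\ inim (Pv i x j').
Proof.
move=> /two_sides [[w [[[h _]|[j' [-> h]]] hw]] _] hlt.
- by rewrite h in hlt.
- by exists j'.
Qed.

Lemma all_path i x j0 : inim (Pv i x j0) -> forall j, inim (Pv i x j).
Proof.
move=> h0.
have up : forall d, val j0 + d < LA -> exists j' : 'I_LA, val j' = val j0 + d /\ inim (Pv i x j').
  elim=> [|d IH] hd; first by exists j0; rewrite addn0.
  have [|j' [hj' hin]] := IH; first by apply: leq_trans hd; rewrite addnS.
  have [|j'' [h'' hin'']] := step_up hin.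
    by rewrite hj'; move: hd; rewrite /LA addnS ltnS.
  by exists j''; rewrite h'' hj' addnS.
have down : forall d, d <= val j0 -> exists j' : 'I_LA, val j' = val j0 - d /\ inim (Pv i x j').
  elim=> [|d IH] hd; first by exists j0; rewrite subn0.
  have [|j' [hj' hin]] := IH; first exact: ltnW.
  have [|j'' [h'' hin'']] := step_down hin; first by rewrite hj' subn_gt0.
  by exists j''; split=> //; rewrite subnS -hj' -h''.
move=> j; case: (leqP (val j0) (val j)) => hj.
- have [|j' [hj' hin]] := up (val j - val j0); first by rewrite subnKC // ltn_ord.
  by have -> : j = j' by apply: val_inj; rewrite hj' subnKC.
- have [|j' [hj' hin]] := down (val j0 - val j); first exact: leq_subr.
  by have -> : j = j' by apply: val_inj; rewrite hj' subKn // ltnW.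
Qed.

Lemma noPv t i x j : phi t <> Pv i x j.
Proof.
move=> ht.
have hall : forall j', exists t', phi t' = Pv i x j'.
  by move=> j'; apply: (all_path (j0 := j)); exists t.
have [g hg] := ex_choice hall.
have gi : injective g by move=> j1 j2 h; have := hg j1; rewrite h hg => -[].
by have := leq_card g gi; rewrite card_ord /LA ltnn.
Qed.

Lemma noHub t : phi t <> Hub.
Proof.
move=> ht; have [z1 [_ [_ [h1 _]]]] := hdeg t.
have := phi_hom h1; rewrite ht.
by case E: (phi z1) => [||] //= _; apply: noPv E.
Qed.

Lemma allCv t : exists i x, phi t = Cv i x.
Proof.
case E: (phi t) => [i x|i x j|]; first by exists i, x.
- by case: (noPv E).
- by case: (noHub E).
Qed.

Lemma classify (t0 : T) : exists i (k : T -> T), forall t, phi t = Cv i (k t).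
Proof.
have [i0 [x0 h0]] := allCv t0.
pose ci t := if phi t is Cv i _ then i else i0.
pose k t := if phi t is Cv _ x then x else x0.
have hc : forall t, phi t = Cv (ci t) (k t).
  by move=> t; rewrite /ci /k; case: (allCv t) => i [x ->].
have hadj : forall t z, e t z -> ci t = ci z.
  by move=> t z /phi_hom; rewrite (hc t) (hc z) /= => -[].
have cl : closed e [pred t | ci t == ci t0] by move=> t z /hadj h; rewrite !inE /= h.
exists (ci t0), k => t; rewrite hc.
have := closed_connect cl (hcon t0 t); rewrite !inE /= eqxx => /esym/eqP h.
exact: (f_equal2 Cv h erefl).
Qed.
End ConsA.
Arguments Hub {T nu}.

Lemma se_map (V W : Type) (f : V -> W) (p q : V * V) :
  same_edge p q -> same_edge (f p.1, f p.2) (f q.1, f q.2).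
Proof. by case=> [[-> ->]|[-> ->]]; [left|right]. Qed.

Lemma se_adj (V : Type) (adj : V -> V -> Prop) (u v x z : V) :
  (forall u v, adj u v -> adj v u) -> same_edge (u, v) (x, z) -> adj x z -> adj u v.
Proof. by move=> hs [[/= -> ->]|[/= -> ->]] //; apply: hs. Qed.

Lemma aut_inj (V : Type) (adj : V -> V -> Prop) s : graph_aut adj s -> injective s.
Proof. by case=> [[t [h1 _]] _] x y hxy; rewrite -(h1 x) -(h1 y) hxy. Qed.

Section ConsA2.
Variables (T : finType) (e : rel T) (nu : nat).
Hypothesis he : fsimple e.
Hypothesis hdeg : forall x, exists z1 z2, z1 != z2 /\ e x z1 /\ e x z2.
Hypothesis hcon : forall x y, connect e x y.
Hypothesis het : edge_transitive e.
Variables a b : T.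
Hypothesis hab : e a b.

Local Notation VA := (VA T nu).
Local Notation adjA := (adjA e (nu := nu)).

Definition three (u : VA) := exists w1 w2 w3, adjA u w1 /\ adjA u w2 /\ adjA u w3 /\
  w1 <> w2 /\ w1 <> w3 /\ w2 <> w3.

Lemma three_Cv i x : three (Cv i x).
Proof.
have [z1 [z2 [hne [h1 h2]]]] := hdeg x.
exists (Cv i z1), (Cv i z2), (Pv i x (Ordinal (n := LA T) (ltn0Sn _))).
do 3 (split => //); split; first by case=> h; rewrite h eqxx in hne.
by split.
Qed.

Lemma three_Pv i x j : ~ three (Pv i x j).
Proof.
case=> w1 [w2 [w3 [h1 [h2 [h3 [n12 [n13 n23]]]]]]].
case: (Pv_nbrs h1) => b1; case: (Pv_nbrs h2) => b2; case: (Pv_nbrs h3) => b3;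
  solve [ by case: n12; (exact: below_uniq b1 b2 || exact: above_uniq b1 b2)
        | by case: n13; (exact: below_uniq b1 b3 || exact: above_uniq b1 b3)
        | by case: n23; (exact: below_uniq b2 b3 || exact: above_uniq b2 b3) ].
Qed.

Lemma three_aut s u : graph_aut adjA s -> three u -> three (s u).
Proof.
move=> hs [w1 [w2 [w3 [h1 [h2 [h3 [n12 [n13 n23]]]]]]]].
have si := aut_inj hs; have [_ ha] := hs.
exists (s w1), (s w2), (s w3).
do 3 (split; first by apply: (proj1 (ha _ _))).
by split; [|split]; move/si.
Qed.

Lemma three_cases u : three u -> (exists i x, u = Cv i x) \/ u = Hub.
Proof.
case: u => [i x|i x j|] h; [left; by exists i, x | by case: (three_Pv h) | by right].
Qed.

Definition psiA (i : 'I_nu) (x : T) : VA := Cv i x.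

Lemma consA_main : edge_repr_is e adjA nu /\ sym_edge_repr_is e adjA (num_edges e * nu).
Proof.
suff: edge_repr_is e adjA #|'I_nu| /\ sym_edge_repr_is e adjA (num_edges e * #|'I_nu|).
  by rewrite card_ord.
apply: (@generic_main T e VA adjA _ psiA _ _ _ _ a b hab).
- by move=> i x y [].
- by move=> i x z h.
- by move=> i j x z x' z' _ _ [[/= [-> _] _]|[/= [-> _] _]].
- move=> i x z x' z' hxz hxz'.
  have [s [hs hse]] := het hxz hxz'.
  exists (sA s i); split; first exact: sA_aut.
  by rewrite /psiA /= eqxx; exact: (se_map (Cv i) hse).
- move=> phi phi_inj phi_hom.
  have [i [k hk]] := classify hdeg hcon phi_inj phi_hom a.
  have ki : injective k by move=> x y hxy; apply: phi_inj; rewrite !hk hxy.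
  have kh : forall x y, e x y -> e (k x) (k y).
    by move=> x y /phi_hom; rewrite !hk => -[].
  have [t [z [htz [ht hz]]]] := edge_surj ki kh hab.
  exists t, z; split=> //; exists i; rewrite !hk ht hz; exact: se_refl.
- move=> s hs u v [i [x [z [hxz hse]]]].
  have huv : adjA u v by apply: (se_adj (@adjA_sym _ _ _ he)) hse _.
  have tu : three u by case: hse => [[/= -> _]|[/= -> _]]; exact: three_Cv.
  have tv : three v by case: hse => [[/= _ ->]|[/= _ ->]]; exact: three_Cv.
  have [_ ha] := hs; move/ha: huv.
  case: (three_cases (three_aut hs tu)) => [[i1 [x1 ->]]|->];
  case: (three_cases (three_aut hs tv)) => [[i2 [x2 ->]]|->] //=.
  by case=> <- h12; exists i1, x1, x2; split=> //; exact: se_refl.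
- move=> phi phi_inj phi_hom.
  have [i [k hk]] := classify hdeg hcon phi_inj phi_hom a.
  exists a, b; split=> //.
  have := phi_hom _ _ hab; rewrite !hk => -[_ h].
  exists i, (k a), (k b); split=> //; exact: se_refl.
Qed.

End ConsA2.

From mathcomp Require Import all_algebra.
From mathcomp Require Import ring.
From Stdlib Require Import Relations ClassicalEpsilon.
Import GRing.Theory.

Section ConsS.
Variables (T : finType) (e : rel T) (y t0 t1 : T) (n : nat).
Hypothesis he : fsimple e.
Hypothesis hstar : forall t, t != y -> e y t.
Hypothesis hstar2 : forall u v, e u v -> u = y \/ v = y.
Hypothesis ht0 : t0 != y.
Hypothesis ht1 : t1 != y.
Hypothesis ht01 : t0 != t1.

Local Open Scope ring_scope.
Local Notation R := ('Z_(n.+3)).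
Definition FT := {ffun T -> R}.
Definition addf (g h : FT) : FT := [ffun s => g s + h s].
Definition subf (g h : FT) : FT := [ffun s => g s - h s].
Definition dl (t : T) : FT := [ffun s => (s == t)%:R].
Definition zf : FT := [ffun => 0].
Definition sumf (g : FT) : R := \sum_s g s.
Definition okS (g : FT) : bool := (g y == 0) && ((sumf g == 0) || (sumf g == 1)).
Definition okA (g : FT) : bool := (g y == 0) && (sumf g == 0).
Definition VS := {g : FT | okS g}.
Definition IS := {g : FT | okA g}.

Lemma one_neq0 : (1 : R) != 0. Proof. by rewrite oner_eq0. Qed.
Lemma two_neq0 : (1 + 1 : R) != 0.
Proof. by apply/eqP => /(congr1 val) /=; rewrite !modn_small. Qed.
Lemma two_neq1 : (1 + 1 : R) != 1.
Proof.
apply/eqP => h; have : (1 + 1 : R) = 1 + 0 by rewrite addr0.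
by move/addrI/eqP; rewrite oner_eq0.
Qed.

Lemma sumf_add g h : sumf (addf g h) = sumf g + sumf h.
Proof. by rewrite /sumf -big_split; apply: eq_bigr => s _; rewrite ffunE. Qed.
Lemma sumf_sub g h : sumf (subf g h) = sumf g - sumf h.
Proof. by rewrite /sumf -sumrB; apply: eq_bigr => s _; rewrite ffunE. Qed.
Lemma sumf_dl t : sumf (dl t) = 1.
Proof.
rewrite /sumf (bigD1 t) //= big1 ?addr0; first by rewrite ffunE eqxx.
by move=> s /negbTE hs; rewrite ffunE hs.
Qed.
Lemma sumf_z : sumf zf = 0.
Proof. by rewrite /sumf big1 // => s _; rewrite ffunE. Qed.

Lemma ok_z : okS zf. Proof. by rewrite /okS sumf_z ffunE eqxx. Qed.
Definition v0 : VS := exist _ zf ok_z.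
Definition toV (g : FT) : VS := insubd v0 g.
Lemma toVK g : okS g -> val (toV g) = g.
Proof. by move=> h; rewrite /toV insubdK. Qed.
Lemma valK' (u : VS) : toV (val u) = u.
Proof. exact: valKd. Qed.

Lemma okAS g : okA g -> okS g.
Proof. by case/andP=> h1 h2; rewrite /okS h1 h2. Qed.
Lemma ok_plus g t : okA g -> t != y -> okS (addf g (dl t)).
Proof.
case/andP=> /eqP h0 /eqP h1 ht.
have ht' : y != t by rewrite eq_sym.
by rewrite /okS sumf_add sumf_dl h1 add0r eqxx orbT !ffunE h0 add0r (negbTE (ht' : y != t)) eqxx.
Qed.

Lemma bip (u v : FT) t : okS u -> okS v -> v = addf u (dl t) -> sumf u = 0 /\ sumf v = 1.
Proof.
case/andP=> _ hu /andP [_ hv] huv.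
have hs : sumf v = sumf u + 1 by rewrite huv sumf_add sumf_dl.
move: hu hv; rewrite hs; case/orP=> /eqP ->; rewrite ?add0r //;
  by rewrite ?(negbTE two_neq0) ?(negbTE two_neq1).
Qed.

Definition adjS (u v : VS) : Prop :=
  [exists t, (t != y) && ((val v == addf (val u) (dl t)) || (val u == addf (val v) (dl t)))].

Lemma adjS_sym u v : adjS u v -> adjS v u.
Proof. by case/existsP=> t /andP [ht h]; apply/existsP; exists t; rewrite ht orbC. Qed.

Lemma addf_dl_neq g t : g != addf g (dl t).
Proof.
apply/eqP => /(congr1 (fun f : FT => f t)); rewrite !ffunE eqxx => /eqP.
by rewrite -subr_eq0 opprD addrA subrr sub0r oppr_eq0 (negbTE one_neq0).
Qed.

Lemma adjS_irr u : ~ adjS u u.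
Proof.
by case/existsP=> t /andP [_]; rewrite orbb (negbTE (addf_dl_neq _ _)).
Qed.

Lemma simpleS : simple_graph adjS.
Proof. split; [exact: adjS_sym | exact: adjS_irr]. Qed.


Definition psiS (a : IS) (x : T) : VS :=
  toV (if x == y then val a else addf (val a) (dl x)).

Lemma val_psi_y a : val (psiS a y) = val a.
Proof. by rewrite /psiS eqxx toVK // okAS // (valP a). Qed.

Lemma val_psi_t a t : t != y -> val (psiS a t) = addf (val a) (dl t).
Proof. by move=> ht; rewrite /psiS (negbTE ht) toVK // ok_plus // (valP a). Qed.

Lemma dl_eval g t s : addf g (dl t) s = g s + (s == t)%:R.
Proof. by rewrite !ffunE. Qed.

Lemma psi_inj a : injective (psiS a).
Proof.
move=> x z h; have hv := congr1 val h.
case: (eqVneq x y) => [hx|hx]; case: (eqVneq z y) => [hz|hz].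
- by rewrite hx hz.
- move: hv; rewrite hx val_psi_y val_psi_t // => hv.
  by have := addf_dl_neq (val a) z; rewrite -hv eqxx.
- move: hv; rewrite hz val_psi_y val_psi_t // => hv.
  by have := addf_dl_neq (val a) x; rewrite hv eqxx.
- move: hv; rewrite !val_psi_t // => /(congr1 (fun f : FT => f x)).
  rewrite !dl_eval eqxx => /addrI; case: (eqVneq x z) => //.
Qed.

Lemma sum_val_A (a : IS) : sumf (val a) = 0.
Proof. by case/andP: (valP a) => _ /eqP. Qed.

Lemma edge_form x z : e x z -> exists t, t != y /\ [set x; z] = [set y; t].
Proof.
have [_ hirr] := he.
move=> hxz; case: (hstar2 hxz) => [hx|hz].
- exists z; rewrite hx; split=> //; apply/negP => /eqP hz.
  by move: hxz; rewrite hx hz hirr.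
- exists x; rewrite hz setUC; split=> //; apply/negP => /eqP hx.
  by move: hxz; rewrite hx hz hirr.
Qed.

Lemma psi_hom a x z : e x z -> adjS (psiS a x) (psiS a z).
Proof.
move=> /edge_form [t [ht hs]].
suff h : adjS (psiS a y) (psiS a t).
  have := se_of_set (psiS a) hs; case=> [[/= -> ->]|[/= -> ->]] //; exact: adjS_sym.
apply/existsP; exists t; rewrite ht val_psi_y val_psi_t //.
by rewrite eqxx.
Qed.

Lemma psi_disj i j x z x' z' : e x z -> e x' z' ->
  same_edge (psiS i x, psiS i z) (psiS j x', psiS j z') -> i = j.
Proof.
move=> /edge_form [t [ht hs]] /edge_form [t' [ht' hs']] h.
have h2 := se_trans (se_trans (se_of_set (psiS i) (esym hs)) h) (se_of_set (psiS j) hs').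
have fin : forall (b c : IS) s, s != y -> psiS b y <> psiS c s.
  move=> b c s hsy /(congr1 (fun u : VS => sumf (val u))).
  rewrite val_psi_y val_psi_t // sumf_add sumf_dl !sum_val_A add0r => /eqP.
  by rewrite eq_sym (negbTE one_neq0).
case: h2 => [[/= h3 _]|[/= h3 _]]; last by case: (fin _ _ _ ht' h3).
by apply: val_inj; rewrite -(val_psi_y i) -(val_psi_y j) h3.
Qed.

Definition trS (a : FT) (tau : {perm T}) (g : FT) : FT :=
  [ffun s => a s + (g (tau s) - a (tau s))].

Section Tau.
Variable (tau : {perm T}).
Hypothesis htau_y : tau y = y.
Hypothesis htauK : forall s, tau (tau s) = s.

Lemma trS_ok a g : okS g -> okS (trS a tau g).
Proof.
case/andP=> /eqP hy hs; rewrite /okS !ffunE htau_y hy.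
have -> : sumf (trS a tau g) = sumf g.
  rewrite /sumf.
  have hi : injective tau by exact: perm_inj.
  rewrite (eq_bigr (fun s => a s + g (tau s) - a (tau s))); last first.
    by move=> s _; rewrite ffunE addrA.
  rewrite sumrB big_split /= (reindex_inj hi (F := g)) /= (reindex_inj hi (F := a)) /=.
  by rewrite addrAC subrr add0r.
by rewrite hs sub0r subrr eqxx.
Qed.

Lemma trSK a g : trS a tau (trS a tau g) = g.
Proof. by apply/ffunP => s; rewrite !ffunE htauK; ring. Qed.

Lemma trS_add a g t : trS a tau (addf g (dl t)) = addf (trS a tau g) (dl (tau t)).
Proof.
apply/ffunP => s; rewrite !ffunE.
have -> : (tau s == t) = (s == tau t).
  by apply/eqP/eqP => [<-|->]; rewrite htauK.
ring.
Qed.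

Definition sS (a : IS) (u : VS) : VS := toV (trS (val a) tau (val u)).

Lemma val_sS a u : val (sS a u) = trS (val a) tau (val u).
Proof. by rewrite /sS toVK // trS_ok // (valP u). Qed.

Lemma sSK a u : sS a (sS a u) = u.
Proof. by apply: val_inj; rewrite !val_sS trSK. Qed.

Lemma tau_ny t : t != y -> tau t != y.
Proof. by move=> ht; apply/eqP => h; move: ht; rewrite -(htauK t) h htau_y eqxx. Qed.

Lemma sS_fwd a u v : adjS u v -> adjS (sS a u) (sS a v).
Proof.
case/existsP=> t /andP [ht h]; apply/existsP; exists (tau t); rewrite tau_ny //=.
by rewrite !val_sS; case/orP: h => /eqP ->; rewrite trS_add eqxx ?orbT.
Qed.

Lemma sS_aut a : graph_aut adjS (sS a).
Proof.
split; first by exists (sS a); split=> v; exact: sSK.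
move=> u v; split; first exact: sS_fwd.
by move/(sS_fwd a); rewrite !sSK.
Qed.

Lemma sS_psi a x : sS a (psiS a x) = psiS a (tau x).
Proof.
apply: val_inj; rewrite val_sS.
case: (eqVneq x y) => [->|hx].
- rewrite htau_y val_psi_y; apply/ffunP => s; rewrite !ffunE; ring.
- rewrite val_psi_t // val_psi_t ?tau_ny //.
  have := trS_add (val a) (val a) x.
  have -> : trS (val a) tau (val a) = val a by apply/ffunP => s; rewrite !ffunE; ring.
  by [].
Qed.

End Tau.

Lemma nbr_A (v w : VS) : sumf (val v) = 0 -> adjS v w ->
  exists t, t != y /\ val w = addf (val v) (dl t).
Proof.
move=> h0 /existsP [t /andP [ht /orP [/eqP h|/eqP h]]]; first by exists t.
have [h1 _] := bip (valP w) (valP v) h.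
have [_ h2] := bip (valP w) (valP v) h.
by move: h2; rewrite h0 => /eqP; rewrite eq_sym (negbTE one_neq0).
Qed.

Lemma nbr_B (v w : VS) : sumf (val v) = 1 -> adjS v w ->
  exists t, t != y /\ val v = addf (val w) (dl t).
Proof.
move=> h0 /existsP [t /andP [ht /orP [/eqP h|/eqP h]]]; last by exists t.
have [h1 _] := bip (valP v) (valP w) h.
by move: h1; rewrite h0 => /eqP; rewrite (negbTE one_neq0).
Qed.

Lemma sum01 (v : VS) : sumf (val v) = 0 \/ sumf (val v) = 1.
Proof. by case/andP: (valP v) => _ /orP [/eqP ->|/eqP ->]; [left|right]. Qed.

Lemma okA_z : okA zf. Proof. by rewrite /okA sumf_z ffunE eqxx. Qed.
Definition toI (g : FT) : IS := insubd (exist _ zf okA_z) g.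
Lemma toIK g : okA g -> val (toI g) = g.
Proof. by move=> h; rewrite /toI insubdK. Qed.

Lemma okA_of (v : VS) : sumf (val v) = 0 -> okA (val v).
Proof. by case/andP: (valP v) => h _ h0; rewrite /okA h h0 eqxx. Qed.

Lemma psi_toI_y (v : VS) : sumf (val v) = 0 -> psiS (toI (val v)) y = v.
Proof. by move=> h; apply: val_inj; rewrite val_psi_y toIK // okA_of. Qed.

Lemma psi_toI_t (v : VS) t : sumf (val v) = 0 -> t != y ->
  val (psiS (toI (val v)) t) = addf (val v) (dl t).
Proof. by move=> h ht; rewrite val_psi_t // toIK // okA_of. Qed.

Definition Lf := [set t : T | t != y].

Lemma okA_minus (g : FT) t : okS g -> sumf g = 1 -> t != y -> okA (subf g (dl t)).
Proof.
case/andP=> /eqP hy _ hs ht.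
have ht' : y != t by rewrite eq_sym.
rewrite /okA sumf_sub sumf_dl hs subrr eqxx andbT !ffunE hy.
by rewrite (negbTE (ht' : y != t)) subrr.
Qed.

Lemma coverS (phi : T -> VS) : injective phi -> (forall x z, e x z -> adjS (phi x) (phi z)) ->
  exists x z, e x z /\ Xc psiS y t0 (phi x) (phi z).
Proof.
move=> phi_inj phi_hom.
set v := phi y.
have hleaf : forall t, t \in Lf -> adjS v (phi t).
  by move=> t; rewrite inE => ht; apply: phi_hom; apply: hstar.
have hA : #|[set phi t | t in Lf]| = #|Lf| by rewrite card_imset.
case: (sum01 v) => hv.
- pose B := [set toV (addf (val v) (dl t)) | t in Lf].
  have sub : [set phi t | t in Lf] \subset B.
    apply/subsetP => w /imsetP [t ht ->].
    have [s [hs hw]] := nbr_A hv (hleaf t ht).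
    by apply/imsetP; exists s; rewrite ?inE // -hw valK'.
  have eqAB : [set phi t | t in Lf] = B.
    by apply/eqP; rewrite eqEcard sub /= hA leq_imset_card.
  have : toV (addf (val v) (dl t0)) \in B by apply/imsetP; exists t0; rewrite ?inE.
  rewrite -eqAB => /imsetP [t ht hpt].
  exists y, t; split; first by apply: hstar; rewrite inE in ht.
  exists (toI (val v)); rewrite psi_toI_y //.
  rewrite (_ : psiS (toI (val v)) t0 = phi t); first exact: se_refl.
  apply: val_inj; rewrite psi_toI_t // -hpt toVK //.
  exact: ok_plus (okA_of hv) ht0.
- pose B := [set toV (subf (val v) (dl t)) | t in Lf].
  have sub : [set phi t | t in Lf] \subset B.
    apply/subsetP => w /imsetP [t ht ->].
    have [s [hs hw]] := nbr_B hv (hleaf t ht).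
    apply/imsetP; exists s; rewrite ?inE //.
    rewrite -[phi t]valK'; congr toV; apply/ffunP => x.
    by rewrite [in RHS]ffunE hw !ffunE addrK.
  have eqAB : [set phi t | t in Lf] = B.
    by apply/eqP; rewrite eqEcard sub /= hA leq_imset_card.
  have : toV (subf (val v) (dl t0)) \in B by apply/imsetP; exists t0; rewrite ?inE.
  rewrite -eqAB => /imsetP [t ht hpt].
  have okm := okA_minus (valP v) hv ht0.
  have hvt : val (phi t) = subf (val v) (dl t0) by rewrite -hpt toVK // okAS.
  have h0 : sumf (val (phi t)) = 0 by rewrite hvt; case/andP: okm => _ /eqP.
  exists y, t; split; first by apply: hstar; rewrite inE in ht.
  exists (toI (val (phi t))); rewrite psi_toI_y //.
  rewrite (_ : psiS (toI (val (phi t))) t0 = v); first exact: se_swap.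
  apply: val_inj; rewrite psi_toI_t // hvt; apply/ffunP => x.
  by rewrite !ffunE subrK.
Qed.


Lemma adj_Xs u v : adjS u v -> Xs e psiS u v.
Proof.
case/existsP=> t /andP [ht /orP [/eqP h|/eqP h]].
- have [h0 _] := bip (valP u) (valP v) h.
  exists (toI (val u)), y, t; split; first exact: hstar.
  rewrite psi_toI_y //; rewrite (_ : psiS (toI (val u)) t = v); first exact: se_refl.
  by apply: val_inj; rewrite psi_toI_t // h.
- have [h0 _] := bip (valP v) (valP u) h.
  exists (toI (val v)), y, t; split; first exact: hstar.
  rewrite psi_toI_y //; rewrite (_ : psiS (toI (val v)) t = u); first exact: se_swap.
  by apply: val_inj; rewrite psi_toI_t // h.
Qed.

Lemma Xs_adj u v : Xs e psiS u v -> adjS u v.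
Proof.
case=> i [x [z [hxz hse]]].
apply: (se_adj adjS_sym hse); exact: psi_hom.
Qed.

Lemma autS i x z x' z' : e x z -> e x' z' ->
  exists s, graph_aut adjS s /\ same_edge (s (psiS i x), s (psiS i z)) (psiS i x', psiS i z').
Proof.
move=> /edge_form [t [ht hs]] /edge_form [t' [ht' hs']].
pose tau := tperm t t'.
have hty : tau y = y by rewrite /tau tpermD // eq_sym.
have htK : forall s, tau (tau s) = s by move=> s; rewrite /tau tpermK.
exists (sS tau i); split; first exact: sS_aut.
rewrite !sS_psi //.
apply: (@se_map _ _ (psiS i) (tau x, tau z) (x', z')).
have h1 := se_map tau (se_of_set id hs).
have h2 := se_of_set id hs'.
apply: (se_trans h1); rewrite /= hty /tau tpermL; exact: se_sym h2.
Qed.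

Definition mv (t : T) (g : FT) : FT := subf (addf g (dl t0)) (dl t).

Lemma mv_ok t g : okA g -> t != y -> okA (mv t g).
Proof.
case/andP=> /eqP hy /eqP hs ht.
have ht' : y != t by rewrite eq_sym.
have ht0' : y != t0 by rewrite eq_sym.
rewrite /okA /mv sumf_sub sumf_add !sumf_dl hs add0r subrr eqxx andbT.
by rewrite !ffunE hy (negbTE ht') (negbTE ht0') addr0 subrr.
Qed.

Definition reachS (u w : VS) := clos_refl_trans VS adjS u w.

Lemma mv_reach t g : okA g -> t != y -> reachS (toV g) (toV (mv t g)).
Proof.
move=> hg ht.
have hp : okS (addf g (dl t0)) by exact: ok_plus.
apply: (@rt_trans _ _ _ (toV (addf g (dl t0)))); apply: rt_step.
- by apply/existsP; exists t0; rewrite ht0 (toVK hp) (toVK (okAS hg)) eqxx.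
- apply: adjS_sym; apply/existsP; exists t; rewrite ht (toVK hp) (toVK (okAS (mv_ok hg ht))).
  apply/orP; left; apply/eqP/ffunP => s; rewrite /mv !ffunE; ring.
Qed.

Lemma iter_mv t g k s : t != t0 ->
  iter k (mv t) g s = g s + k%:R * ((s == t0)%:R - (s == t)%:R).
Proof.
move=> htt; elim: k => [|k IH] /=; first by rewrite mul0r addr0.
by rewrite /mv !ffunE IH -natr1; ring.
Qed.

Lemma iter_ok t g k : okA g -> t != y -> okA (iter k (mv t) g).
Proof. by move=> hg ht; elim: k => [|k IH] //=; apply: mv_ok. Qed.

Lemma iter_reach t g k : okA g -> t != y -> reachS (toV g) (toV (iter k (mv t) g)).
Proof.
move=> hg ht; elim: k => [|k IH] /=; first exact: rt_refl.
apply: rt_trans IH _; exact: mv_reach (iter_ok _ hg ht) ht.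
Qed.

Lemma reach_zero_seq (sq : seq T) : forall g, okA g ->
  (forall x, x \notin sq -> x != t0 -> g x = 0) -> reachS (toV g) (toV zf).
Proof.
elim: sq => [|t sq IH] g hg hsup.
- have hz : g = zf.
    apply/ffunP => x; rewrite ffunE.
    case: (eqVneq x t0) => [->|hx]; last exact: hsup.
    case/andP: hg => _ /eqP; rewrite /sumf (bigD1 t0) //= big1 ?addr0 //.
    by move=> s hs; apply: hsup.
  rewrite hz; exact: rt_refl.
- have hgy : g y = 0 by case/andP: (hg) => /eqP.
  case: (eqVneq t t0) => [htt|htt].
    apply: IH hg _ => x hx hx0; apply: hsup => //.
    by rewrite inE negb_or hx andbT htt.
  case: (eqVneq t y) => [hty|hty].
    apply: IH hg _ => x hx hx0; case: (eqVneq x t) => [->|hxt].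
      by rewrite hty.
    by apply: hsup => //; rewrite inE negb_or hx andbT.
  pose k := val (g t).
  have hk := iter_ok k hg hty.
  apply: rt_trans (iter_reach k hg hty) (IH _ hk _) => x hx hx0.
  rewrite iter_mv //; case: (eqVneq x t) => [->|hxt].
    by rewrite (negbTE htt) /k natr_Zp /=; ring.
  rewrite (negbTE hx0) /= subrr mulr0 addr0; apply: hsup => //.
  by rewrite inE negb_or hxt.
Qed.

Lemma reach_zero (u : VS) : reachS u (toV zf).
Proof.
have hA : forall g, okA g -> reachS (toV g) (toV zf).
  by move=> g hg; apply: (reach_zero_seq (sq := enum T)) hg _ => x; rewrite mem_enum.
case: (sum01 u) => hu.
- by rewrite -(valK' u); apply: hA; exact: okA_of.
- have okm := okA_minus (valP u) hu ht0.
  apply: rt_trans (hA _ okm); apply: rt_step; apply/existsP; exists t0.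
  rewrite ht0 toVK ?okAS //; apply/orP; right; apply/eqP/ffunP => s.
  by rewrite !ffunE subrK.
Qed.

Lemma connS : connected_graph adjS.
Proof.
split; first exact: (inhabits (toV zf)).
move=> u v; apply: rt_trans (reach_zero u) _.
apply: crt_sym; [exact: adjS_sym | exact: reach_zero].
Qed.

Lemma card_IS : (n.+3 <= #|{: IS}|)%N.
Proof.
pose f (c : R) : FT := [ffun s => c * ((s == t0)%:R - (s == t1)%:R)].
have hok : forall c, okA (f c).
  have hy0 : y != t0 by rewrite eq_sym.
  have hy1 : y != t1 by rewrite eq_sym.
  move=> c; rewrite /okA /sumf !ffunE (negbTE hy0) (negbTE hy1).
  rewrite subrr mulr0 eqxx /=.
  rewrite (eq_bigr (fun s => c * (dl t0 s - dl t1 s))); last by move=> s _; rewrite !ffunE.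
  by rewrite -mulr_sumr sumrB -!/(sumf _) !sumf_dl subrr mulr0.
have fi : injective (fun c => toI (f c)).
  move=> c c' /(congr1 val); rewrite !toIK // => /(congr1 (fun g : FT => g t0)).
  by rewrite !ffunE eqxx (negbTE ht01) subr0 !mulr1.
by have := leq_card _ fi; rewrite card_ord.
Qed.


Lemma consS_main : edge_repr_is e adjS #|{: IS}| /\ sym_edge_repr_is e adjS (num_edges e * #|{: IS}|).
Proof.
apply: (@generic_main T e VS adjS _ psiS _ _ _ _ y t0 (hstar ht0)).
- exact: psi_inj.
- exact: psi_hom.
- exact: psi_disj.
- exact: autS.
- move=> phi hi hh; exact: coverS.
- move=> s [_ hs] u v /Xs_adj h; apply: adj_Xs; exact: (proj1 (hs u v) h).
- move=> phi hi hh; exists y, t0; split; first exact: hstar.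
  apply: adj_Xs; apply: hh; exact: hstar.
Qed.

End ConsS.


From Stdlib Require Import Relations ClassicalEpsilon Classical.

Section ConsE.
Variables (T : finType) (e : rel T) (y x : T) (N : nat).
Hypothesis he : fsimple e.
Hypothesis hxy : e y x.
Hypothesis hleaf : forall t, t != y -> t = x.

Definition adjE (u v : option 'I_N) : Prop := (u == None) != (v == None).

Lemma simpleE : simple_graph adjE.
Proof. by split=> [u v|u]; rewrite /adjE ?eqxx // eq_sym. Qed.

Lemma connE : connected_graph adjE.
Proof.
split; first exact: (inhabits None).
have h : forall u, clos_refl_trans _ adjE u None.
  by case=> [i|]; [apply: rt_step | apply: rt_refl].
move=> u v; apply: rt_trans (h u) _; apply: crt_sym; last exact: h.
by move=> a b; rewrite /adjE eq_sym.
Qed.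

Definition psiE (i : 'I_N) (t : T) : option 'I_N := if t == y then None else Some i.

Lemma xny : x != y.
Proof. by apply/eqP => h; have [_ hi] := he; move: hxy; rewrite h hi. Qed.

Lemma edgeE u v : e u v -> [set u; v] = [set y; x].
Proof.
have [hs hi] := he.
move=> huv; case: (eqVneq u y) => [hu|hu]; case: (eqVneq v y) => [hv|hv].
- by move: huv; rewrite hu hv hi.
- by rewrite hu (hleaf hv).
- by rewrite hv (hleaf hu) setUC.
- by move: huv; rewrite (hleaf hu) (hleaf hv) hi.
Qed.

Lemma consE_main : edge_repr_is e adjE N /\ sym_edge_repr_is e adjE (num_edges e * N).
Proof.
suff: edge_repr_is e adjE #|'I_N| /\ sym_edge_repr_is e adjE (num_edges e * #|'I_N|).
  by rewrite card_ord.
have pyx : forall i, psiE i y = None /\ psiE i x = Some i.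
  by move=> i; rewrite /psiE eqxx (negbTE xny).
have hadj : forall i, adjE (psiE i y) (psiE i x).
  by move=> i; case: (pyx i) => -> ->.
apply: (@generic_main T e _ adjE _ psiE _ _ _ _ y x hxy).
- move=> i t t'; rewrite /psiE.
  case: (eqVneq t y) => [->|ht]; case: (eqVneq t' y) => [->|ht'] //.
  by rewrite (hleaf ht) (hleaf ht').
- move=> i u v /edgeE h; have := se_of_set (psiE i) h.
  by case=> [[/= -> ->]|[/= -> ->]]; [|rewrite /adjE eq_sym]; exact: hadj.
- move=> i j u v u' v' /edgeE h /edgeE h' hs.
  have := se_trans (se_trans (se_of_set (psiE i) (esym h)) hs) (se_of_set (psiE j) h').
  by case: (pyx i) (pyx j) => -> -> [-> ->] [[_ [->]]|[]].
- move=> i u v u' v' /edgeE h /edgeE h'; exists id; split.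
    by split; [exists id | ].
  by apply: se_of_set; rewrite h h'.
- move=> phi phi_inj phi_hom; exists y, x; split=> //.
  have := phi_hom _ _ hxy; rewrite /adjE.
  case: (phi y) => [j|]; case: (phi x) => [j'|] //= _.
  + by exists j; case: (pyx j) => -> ->; exact: se_swap.
  + by exists j'; case: (pyx j') => -> ->; exact: se_refl.
- have key : forall u v, adjE u v -> Xs e psiE u v.
    move=> u v; rewrite /adjE; case: u => [j|]; case: v => [j'|] //= _.
    + by exists j, y, x; split=> //; case: (pyx j) => -> ->; exact: se_swap.
    + by exists j', y, x; split=> //; case: (pyx j') => -> ->; exact: se_refl.
  move=> s [_ hs] u v [i [a [b [hab hse]]]]; apply: key; apply/(hs u v).
  have := se_of_set (psiE i) (edgeE hab); move/(se_trans hse).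
  by case: (pyx i) => -> -> [[/= -> ->]|[/= -> ->]].
- move=> phi phi_inj phi_hom; exists y, x; split=> //.
  have := phi_hom _ _ hxy; rewrite /adjE.
  case: (phi y) => [j|]; case: (phi x) => [j'|] //= _.
  + by exists j, y, x; split=> //; case: (pyx j) => -> ->; exact: se_swap.
  + by exists j', y, x; split=> //; case: (pyx j') => -> ->; exact: se_refl.
Qed.
End ConsE.

Section KStruct.
Variables (T : finType) (e : rel T).
Hypothesis he : fsimple e.
Hypothesis hcon : fconnected e.
Hypothesis het : edge_transitive e.
Hypothesis hk : 0 < num_edges e.

Lemma has_edge : exists a b, e a b.
Proof.
move: hk; rewrite /num_edges card_gt0 => /set0Pn [E /imsetP [p]].
by rewrite inE => hp _; exists p.1, p.2.
Qed.

Lemma has_nbr x : exists z, e x z.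
Proof.
have [a [b hab]] := has_edge.
have [_ hi] := he.
have [w hw] : exists w, w != x.
  case: (eqVneq a x) => [hax|hax]; last by exists a.
  by exists b; apply/eqP => hbx; move: hab; rewrite hax hbx hi.
have [_ hc] := hcon.
case/connectP: (hc x w) => [[|z p]] /=; first by move=> _ hwx; rewrite hwx eqxx in hw.
by case/andP=> hz _ _; exists z.
Qed.

Definition leafb (v : T) := [forall z, forall z', e v z ==> e v z' ==> (z == z')].

Lemma leafbP v : reflect (forall z z', e v z -> e v z' -> z = z') (leafb v).
Proof.
apply: (iffP forallP) => [h z z' h1 h2|h z].
- by move: (h z) => /forallP /(_ z') ; rewrite h1 h2 => /eqP.
- by apply/forallP => z'; apply/implyP => h1; apply/implyP => h2; rewrite (h _ _ h1 h2).
Qed.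

Lemma dichotomy : (forall x, exists z1 z2, z1 != z2 /\ e x z1 /\ e x z2) \/
  (exists x y, e x y /\ leafb x).
Proof.
case: (classic (forall x, exists z1 z2, z1 != z2 /\ e x z1 /\ e x z2)) => h; first by left.
right; have [x hx] := not_all_ex_not _ _ h.
have [y hy] := has_nbr x.
exists x, y; split=> //; apply/leafbP => z z' hz hz'.
apply/eqP; apply: contraT => hne; case: hx; by exists z, z'.
Qed.

Variables x y : T.
Hypothesis hxy : e x y.
Hypothesis hlx : leafb x.

Lemma every_edge_leaf u v : e u v -> leafb u || leafb v.
Proof.
move=> huv; have [s [hs hse]] := het hxy huv.
have ls : leafb (s x).
  apply/leafbP => z z' h1 h2.
  have h1' : e x ((s^-1)%g z) by rewrite hs permKV.
  have h2' : e x ((s^-1)%g z') by rewrite hs permKV.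
  have := (leafbP _ hlx) _ _ h1' h2'; exact: (can_inj (permKV s)).
case: hse => [[/= h1 h2]|[/= h1 h2]]; [by rewrite -h1 ls | by rewrite -h1 ls orbT].
Qed.

Lemma star_struct t : t = y \/ (e y t /\ leafb t).
Proof.
have [hsym hirr] := he.
pose S := [pred t | (t == y) || (e y t && leafb t)].
have fwd : forall t w, e t w -> t \in S -> w \in S.
  move=> t1 w htw; rewrite !inE => /orP [/eqP ht|/andP [hyt hl]].
  - rewrite ht in htw; case/orP: (every_edge_leaf htw) => hl.
    + have hyx : e y x by rewrite hsym.
      have -> : w = x by apply: (leafbP _ hl) htw hyx.
      by rewrite hyx hlx orbT.
    + by rewrite htw hl orbT.
  - have hty : e t1 y by rewrite hsym.
    by rewrite (leafbP _ hl _ _ htw hty) eqxx.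
have cl : closed e S.
  move=> t1 w htw; apply/idP/idP; first exact: fwd.
  by apply: fwd; rewrite hsym.
have [_ hc] := hcon.
have := closed_connect cl (hc y t); rewrite !inE eqxx /= => /esym.
by case/orP => [/eqP ->|/andP []]; [left|right].
Qed.

Lemma hstar t : t != y -> e y t.
Proof. by case: (star_struct t) => [->|[]] //; rewrite eqxx. Qed.

Lemma hstar2 u v : e u v -> u = y \/ v = y.
Proof.
have [hsym _] := he.
move=> huv; case: (star_struct u) => [->|[hyu hl]]; first by left.
right; apply: (leafbP _ hl) huv _; by rewrite hsym.
Qed.

End KStruct.

From Stdlib Require Import Relations ClassicalEpsilon Classical.

Theorem proposition1 (T : finType) (e : rel T) :
  fsimple e -> fconnected e -> edge_transitive e -> 0 < num_edges e ->
  edge_costly_connected e.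
Proof.
move=> he hcon het hk m.
have [a [b hab]] := has_edge hk.
have hcon' : forall x y, connect e x y := hcon.2.
have [hsym hirr] := he.
case: (dichotomy he hcon hk) => [hdeg|[x [y [hxy hlx]]]].
- exists (VA T m), (@adjA T e m); split; first exact: simpleA.
  split; first exact: connA.
  exists m; have [h1 h2] := consA_main m he hdeg hcon' het hab.
  by split; [|split] => //; rewrite leq_pmull.
- have hst := hstar he hcon het hxy hlx.
  have hst2 := hstar2 he hcon het hxy hlx.
  have hyx : e y x by rewrite hsym.
  have hxny : x != y by apply/eqP => h; move: hxy; rewrite h hirr.
  case: (boolP [exists t, (t != y) && (t != x)]) => [/existsP [t1 /andP [ht1y ht1x]] | hno].
  + have hx1 : x != t1 by rewrite eq_sym.
    exists (VS y m), (@adjS T y m); split; first exact: simpleS.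
    split; first exact: (connS m hxny).
    eexists; have [h1 h2] := consS_main m he hst hst2 hxny.
    split; first exact: h1; split; first exact: h2.
    apply: leq_trans (leq_pmull _ hk).
    by apply: leq_trans (card_IS m hxny ht1y hx1); rewrite leqW // leqW.
  + have hleaf : forall t, t != y -> t = x.
      move=> t hty; apply/eqP; apply: contraNT hno => htx.
      by apply/existsP; exists t; rewrite hty htx.
    exists (option 'I_m), (@adjE m); split; first exact: simpleE.
    split; first exact: connE.
    exists m; have [h1 h2] := consE_main m he hyx hleaf.
    by split; [|split] => //; rewrite leq_pmull.
Qed.
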